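(* Let $l_2$ be an even positive integer and $l_3$ an odd integer with $l_3>1$, and let $G=\Theta(1,l_2,l_3)$. Then $G$ is enumeratively chromatic-choosable.
   Context: For positive integers $l_1,l_2,l_3$, the theta graph $\Theta(l_1,l_2,l_3)$ consists of two end vertices joined by three internally disjoint paths of lengths (numbers of edges) $l_1,l_2,l_3$. An $m$-assignment $L$ for a graph $G$ assigns to each vertex $v$ a set $L(v)$ of $m$ colors; $P(G,L)$ is the number of proper colorings $f$ of $G$ with $f(v)\in L(v)$ for all $v$. $P(G,m)$ is the chromatic polynomial, and the list color function $P_\ell(G,m)$ is the minimum of $P(G,L)$ over all $m$-assignments $L$. $G$ is enumeratively chromatic-choosable if $P_\ell(G,m)=P(G,m)$ for all $m\in\mathbb{N}$. *)

(* Defs.v *)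
From mathcomp Require Import all_boot.
Set Implicit Arguments. Unset Strict Implicit. Unset Printing Implicit Defensive.

Definition proper_col (T : finType) (e : rel T) (c : T -> nat) : bool :=
  [forall x, forall y, e x y ==> (c x != c y)].

Definition m_assignment (T : finType) (m : nat) (L : T -> seq nat) : Prop :=
  forall v, size (L v) = m /\ uniq (L v).

(* P(G,L) for an m-assignment L: number of proper colourings f with f v \in L v.
   Such a colouring is encoded by the choice of an index in 'I_m into each list
   L v; since the lists are duplicate-free this is a bijection. *)
Definition P_list (T : finType) (e : rel T) (m : nat) (L : T -> seq nat) : nat :=
  #|[set f : {ffun T -> 'I_m} | proper_col e (fun v => nth 0 (L v) (f v))]|.

Definition chrom_poly (T : finType) (e : rel T) (m : nat) : nat :=
  #|[set f : {ffun T -> 'I_m} | proper_col e (fun v => nat_of_ord (f v))]|.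

Definition is_list_color_fun (T : finType) (e : rel T) (m k : nat) : Prop :=
  (exists L, m_assignment m L /\ P_list e m L = k) /\
  (forall L, m_assignment m L -> k <= P_list e m L).

Definition enum_chromatic_choosable (T : finType) (e : rel T) : Prop :=
  forall m : nat, is_list_color_fun e m (chrom_poly e m).

(* Theta graph Theta(l1,l2,l3) on vertex set 'I_(l1+l2+l3-1):
   vertex 0 and 1 are the two end vertices; the internal vertices of path j
   (of length l_j) are numbered consecutively after those of earlier paths. *)
Definition theta_pv (o l k : nat) : nat :=
  if k == 0 then 0 else if k == l then 1 else o + k + 1.

Definition path_adj (o l x y : nat) : bool :=
  has (fun k => ((x == theta_pv o l k) && (y == theta_pv o l k.+1)) ||
                ((y == theta_pv o l k) && (x == theta_pv o l k.+1))) (iota 0 l).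

Definition theta_adj (l1 l2 l3 : nat) (x y : nat) : bool :=
  [|| path_adj 0 l1 x y, path_adj (l1.-1) l2 x y | path_adj (l1.-1 + l2.-1) l3 x y].

Definition theta_graph (l1 l2 l3 : nat) : rel 'I_(l1 + l2 + l3 - 1) :=
  fun x y => theta_adj l1 l2 l3 x y.
Arguments theta_graph : clear implicits.

(* Main.v *)
Require Import Defs.
From mathcomp Require Import all_boot zify.
Set Implicit Arguments. Unset Strict Implicit. Unset Printing Implicit Defensive.

Fixpoint Np (a : nat) (Ls : seq (seq nat)) (b : nat) : nat :=
  if Ls is L :: Ls' then \sum_(x <- L | x != a) Np x Ls' b else (a != b).

Definition Sg (L : seq nat) Ls b := \sum_(x <- L) Np x Ls b.

Definition good (m : nat) (L : seq nat) := uniq L && (size L == m).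

Lemma sum_pred1 (L : seq nat) (F : nat -> nat) a : uniq L ->
  \sum_(x <- L | x != a) F x + (a \in L) * F a = \sum_(x <- L) F x.
Proof.
move=> uL; case aL: (a \in L).
  by rewrite (bigD1_seq a aL uL) /= mul1n addnC.
rewrite mul0n addn0 big_mkcond /=; apply: eq_big_seq => x xL.
case: eqP => // exa; by rewrite -exa xL in aL.
Qed.

Lemma Nsplit a L Ls b : uniq L -> Np a (L :: Ls) b + (a \in L) * Np a Ls b = Sg L Ls b.
Proof. by move=> uL; rewrite /= sum_pred1. Qed.

Lemma sum_const_seq (L : seq nat) c : \sum_(x <- L) c = size L * c.
Proof. by rewrite big_const_seq count_predT iter_addn_0 mulnC. Qed.

Lemma sum_const_seq_cond (L : seq nat) (P : pred nat) c : \sum_(x <- L | P x) c = count P L * c.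
Proof. by rewrite big_const_seq iter_addn_0 mulnC. Qed.

Lemma sub_sum (L L' : seq nat) (F : nat -> nat) : uniq L -> uniq L' ->
  \sum_(x <- L | x \in L') F x <= \sum_(x <- L') F x.
Proof.
move=> uL uL'.
have -> : \sum_(x <- L | x \in L') F x = \sum_(x <- filter (mem L') L) F x by rewrite big_filter.
have -> : \sum_(x <- L') F x = \sum_(x <- L') F x * 1 by apply: eq_bigr => *; rewrite muln1.
have -> : \sum_(x <- filter (mem L') L) F x = \sum_(x <- filter (mem L) L') F x.
  apply: perm_big; apply: uniq_perm; rewrite ?filter_uniq // => x.
  by rewrite !mem_filter andbC.
rewrite big_filter big_mkcond /=; apply: leq_sum => x _.
by case: (x \in L); rewrite ?muln1.
Qed.

Lemma sub_sum_z (L L' : seq nat) (F : nat -> nat) z : uniq L -> uniq L' ->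
  z \in L' -> z \notin L ->
  \sum_(x <- L | x \in L') F x + F z <= \sum_(x <- L') F x.
Proof.
move=> uL uL' zL' zL.
rewrite (bigD1_seq z zL' uL') /= addnC leq_add2l.
have -> : \sum_(x <- L | x \in L') F x = \sum_(x <- filter (mem L') L) F x by rewrite big_filter.
have -> : \sum_(x <- filter (mem L') L) F x = \sum_(x <- filter (mem L) L') F x.
  apply: perm_big; apply: uniq_perm; rewrite ?filter_uniq // => x.
  by rewrite !mem_filter andbC.
rewrite big_filter [X in _ <= X]big_mkcond [X in X <= _]big_mkcond /=; apply: leq_sum => x _.
case xL: (x \in L) => //; case: eqP => // exz.
by move: zL; rewrite -exz xL.
Qed.

Lemma G1 m L L' Ls b : good m L -> good m L' ->
  Sg L (L' :: Ls) b + \sum_(x <- L | x \in L') Np x Ls b = m * Sg L' Ls b.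
Proof.
move=> /andP[uL /eqP sL] /andP[uL' _].
rewrite -sL -sum_const_seq /Sg.
rewrite [X in _ + X]big_mkcond -big_split /=; apply: eq_bigr => x _.
have := Nsplit x Ls b uL'; rewrite /Sg => <-.
by case: (x \in L'); rewrite ?mul1n ?mul0n.
Qed.

Lemma bigD1_nat (r : seq nat) j (F : nat -> nat) : j \in r -> uniq r ->
  \sum_(i <- r) F i = F j + \sum_(i <- r | i != j) F i.
Proof. exact: bigD1_seq. Qed.

Fixpoint us m k : nat * nat :=
  if k is k'.+1 then ((us m k').2 + (m-2) * (us m k').1, (m-1) * (us m k').1) else (1, 0).
Definition uu m k := (us m k).1.
Definition ss m k := (us m k).2.

Lemma uuS m k : uu m k.+1 = ss m k + (m-2) * uu m k. Proof. by []. Qed.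
Lemma ssS m k : ss m k.+1 = (m-1) * uu m k. Proof. by []. Qed.

Lemma us_facts m k : 2 <= m ->
  (odd k -> ss m k = uu m k + 1 /\ m * uu m k + 1 = (m-1)^(k.+1)) /\
  (~~ odd k -> uu m k = ss m k + 1 /\ m * uu m k = (m-1)^(k.+1) + 1).
Proof.
move=> m2; elim: k => [|k [IHo IHe]].
  by split=> // _; rewrite /uu /ss /= expn1; split=> //; lia.
rewrite uuS ssS /= expnS; case ok: (odd k) => /=.
  have [h1 h2] := IHo ok; split=> // _; rewrite h1; split.
    by nia.
  by rewrite -h2; nia.
have [h1 h2] := IHe (negbT ok); split=> // _; rewrite h1; split.
  by nia.
by nia.
Qed.

Lemma uu_small m k : m <= 2 -> (odd k -> uu m k = 0) /\ (~~ odd k -> ss m k = 0).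
Proof.
move=> m2; have m20 : m - 2 = 0 by lia.
elim: k => [|k [IHo IHe]]; first by split.
rewrite uuS ssS m20 mul0n addn0 /=; case ok: (odd k) => /=.
  by split=> // _; rewrite IHo ?muln0 // ok.
by split=> // _; rewrite IHe ?muln0 // ok.
Qed.

Lemma E2 m k : 2 <= m -> odd k -> uu m k.+2 = (m-2) * (m-1)^(k.+1) + uu m k.
Proof.
move=> m2 ok; have [ho _] := us_facts k m2; have [h1 h2] := ho ok.
rewrite uuS ssS uuS -h2 h1; nia.
Qed.

Lemma sum_bool_count (L : seq nat) (P : pred nat) : \sum_(x <- L) (P x : nat) = count P L.
Proof. by elim: L => [|x L IH]; rewrite ?big_nil ?big_cons ?IH. Qed.

Lemma pow_bound m L Ls b : all (good m) (L :: Ls) -> (m-1)^(size Ls).+1 <= Sg L Ls b.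
Proof.
elim: Ls L => [|L' Ls IH] L /=.
  rewrite andbT expn1 => /andP[uL /eqP sL].
  rewrite /Sg /=.
  rewrite sum_bool_count.

  have h2 : count (pred1 b) L + count (fun x => x != b) L = size L := count_predC (pred1 b) L.
  move: h2; have := count_uniq_mem b uL.
  case: (b \in L) => /= h1 h2; lia.
move=> /andP[gL /andP[gL' gLs]].
have := IH L' (introT andP (conj gL' gLs)).
have := G1 Ls b gL gL'.
move: (gL) (gL') => /andP[uL _] /andP[uL' _].
have := sub_sum (fun x => Np x Ls b) uL uL'.
rewrite /Sg => h1 h2 h3.
rewrite expnS; apply: leq_trans (leq_mul (leqnn (m-1)) h3) _.
set S' := \sum_(x <- L') Np x Ls b in h1 h2 h3 *.
set S := \sum_(x <- L) Np x (L' :: Ls) b in h2 *.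
set I := \sum_(x <- L | x \in L') Np x Ls b in h1 h2.
rewrite mulnBl mul1n; lia.
Qed.

Lemma exists_z m L L' a : good m L -> good m L' -> a \in L -> a \notin L' ->
  exists2 z, z \in L' & z \notin L.
Proof.
move=> /andP[uL /eqP sL] /andP[uL' /eqP sL'] aL aL'.
case: (boolP (all (mem L) L')) => [/allP sub|/allPn [z zL' zL]]; last by exists z.
have le : size L <= size L' by rewrite sL sL'.
have [_ Heq] := uniq_min_size uL' sub le.
by rewrite Heq aL in aL'.
Qed.

Lemma Sg_ge_Np L Ls b z : z \in L -> uniq L -> Np z Ls b <= Sg L Ls b.
Proof. by move=> zL uL; rewrite /Sg (bigD1_seq z zL uL) /= leq_addr. Qed.

Lemma LB m n Ls a b : size Ls = n.*2.+1 -> all (good m) Ls -> uu m (n.*2.+1) <= Np a Ls b.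
Proof.
case: (leqP m 2) => [m2|m3].
  by have [h _] := uu_small n.*2.+1 m2; rewrite h //= odd_double.
elim: n Ls a => [|n IH] Ls a.
  case: Ls => [|L [|//]] //= _; rewrite andbT => gL.
  have := Nsplit a [::] b (proj1 (andP gL)).
  have := pow_bound b (L := L) (Ls := [::]) (m := m); rewrite /= gL expn1 => /(_ isT).
  rewrite /uu /= muln1; case: (a \in L) => /=; lia.
case: Ls => [|L [|L' Ls]] //= [sLs] /andP[gL /andP[gL' gLs]].
have gLs' : all (good m) (L' :: Ls) by rewrite /= gL' gLs.
have IH' : forall c, uu m n.*2.+1 <= Np c Ls b.
  move=> c; apply: IH => //; lia.
suff H : uu m (n.*2.+2).+1 <= Np a [:: L, L' & Ls] b by [].
rewrite E2; [| lia | by rewrite /= odd_double].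
move: (gL) (gL') => /andP[uL /eqP sL] /andP[uL' /eqP sL'].
have pb := pow_bound b (L := L') (Ls := Ls) (m := m); rewrite /= gL' gLs in pb.
have {}pb := pb isT; rewrite sLs in pb.
have hi := Nsplit a (L' :: Ls) b uL.
have hii := Nsplit a Ls b uL'.
have hiii := G1 Ls b gL gL'.
have hI := sub_sum (fun x => Np x Ls b) uL uL'.
have zL' : nth 0 L' 0 \in L'.
  by apply: mem_nth; rewrite sL'; lia.
set z := nth 0 L' 0 in zL'.
have hz := Sg_ge_Np Ls b zL' uL'.
have hNz := IH' z.
have hNa := IH' a.
move: hi hii hiii hI pb hz hNz hNa.
rewrite /Sg -/(Sg L' Ls b) -/(Sg L (L' :: Ls) b).
set S' := Sg L' Ls b; set S := Sg L (L' :: Ls) b.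
set I := \sum_(x <- L | x \in L') Np x Ls b.
set N1 := Np a (L :: L' :: Ls) b; set N2 := Np a (L' :: Ls) b; set N3 := Np a Ls b.
set U := uu m n.*2.+1; set P := (m-1) ^ (n.*2.+1).+1.

move=> hi hii hiii hI pb hz hNz hNa.
have hP : (m - 2) * P <= (m - 2) * S' by apply: leq_mul.
suff : (m - 2) * S' + U <= N1 by lia.
have e1 : m * S' = (m - 2) * S' + 2 * S' by rewrite -mulnDl; congr (_ * _); lia.
case aL: (a \in L) hi; case aL': (a \in L') hii; rewrite /= ?mul1n ?mul0n ?addn0 => hii hi.
- lia.
- have [z' z'L' z'L] := exists_z gL gL' aL (negbT aL').
  have := sub_sum_z (fun x => Np x Ls b) uL uL' z'L' z'L.
  have := IH' z'; rewrite /= -/I -/(Sg L' Ls b) -/S' -/U => h1 h2; lia.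
- lia.
- lia.
Qed.

Lemma Np_rcons a Ls L c : Np a (rcons Ls L) c = \sum_(x <- L | x != c) Np a Ls x.
Proof.
elim: Ls a => [|L' Ls IH] a /=.
  rewrite [RHS]big_mkcond [LHS]big_mkcond /=; apply: eq_bigr => x _ /=; rewrite (eq_sym a x).
  by case: (x != a); case: (x != c).
rewrite (eq_bigr (fun y => \sum_(x <- L | x != c) Np y Ls x)); last by move=> y _; rewrite IH.
exact: exchange_big.
Qed.

Definition Cyc (Cs : seq (seq nat)) := if Cs is C0 :: Ds then \sum_(a <- C0) Np a Ds a else 0.

Lemma Cyc_rot C0 C1 Ds : Cyc [:: C0, C1 & Ds] = Cyc (C1 :: rcons Ds C0).
Proof.
rewrite /=.
rewrite (eq_bigr (fun a => \sum_(x <- C1) (if x != a then Np x Ds a else 0))); last first.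
  by move=> a _; rewrite big_mkcond.
transitivity (\sum_(x <- C1) \sum_(a <- C0) (if x != a then Np x Ds a else 0)).
  exact: exchange_big.
apply: eq_big => // x _; rewrite Np_rcons [RHS]big_mkcond.
by apply: eq_big => // a _; rewrite eq_sym.
Qed.

Lemma cnt_neq (s : seq nat) b : uniq s -> b \in s -> count (predC1 b) s = (size s).-1.
Proof.
move=> us bs.
have h2 : count (pred1 b) s + count (predC1 b) s = size s := count_predC (pred1 b) s.
have h1 : count (pred1 b) s = 1 by rewrite count_uniq_mem // bs.
lia.
Qed.

Lemma Np_unif m C k a b : good m C -> a \in C -> b \in C ->
  Np a (nseq k C) b = if a == b then ss m k else uu m k.
Proof.
move=> /andP[uC /eqP sC]; elim: k a => [|k IH] a aC bC.
  by rewrite /= /ss /uu /=; case: (a == b).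
rewrite /= big_seq_cond.
rewrite (eq_bigr (fun x => if x == b then ss m k else uu m k)); last first.
  by move=> x /andP[xC _]; rewrite IH.
rewrite -big_seq_cond -big_filter.
have uf : uniq (filter (predC1 a) C) by rewrite filter_uniq.
have sf : size (filter (predC1 a) C) = m.-1 by rewrite size_filter cnt_neq // sC.
case: eqP => [<-|/eqP nab].
  rewrite (eq_big_seq (fun _ => uu m k)); last first.
    by move=> x; rewrite mem_filter => /andP[/= xa _]; rewrite (negbTE xa).
  by rewrite sum_const_seq sf ssS; congr (_ * _); lia.
have bf : b \in filter (predC1 a) C by rewrite mem_filter /= eq_sym nab.
rewrite (bigD1_seq b bf uf) eqxx /=.
rewrite (eq_bigr (fun _ => uu m k)); last by move=> x /negbTE ->.
rewrite sum_const_seq_cond cnt_neq // sf uuS; congr (_ + _ * _); lia.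
Qed.

Lemma Cyc_unif m C k : good m C -> Cyc (C :: nseq k C) = m * ss m k.
Proof.
move=> gC; rewrite /= (eq_big_seq (fun _ => ss m k)); last first.
  by move=> a aC; rewrite (Np_unif k gC aC aC) eqxx.
by move: gC => /andP[_ /eqP <-]; rewrite sum_const_seq.
Qed.

Lemma Np_perm a Ls Ls' b : all2 (fun L L' => perm_eq L L') Ls Ls' -> Np a Ls b = Np a Ls' b.
Proof.
elim: Ls Ls' a => [|L Ls IH] [|L' Ls'] a //= /andP[pL pLs].
rewrite (perm_big _ pL) /=; apply: eq_bigr => x _; exact: IH.
Qed.

Lemma E4 m k : 3 <= m -> odd k -> 3 <= k -> m * (uu m k + 1) <= (m-1)^k + (m-1) * uu m k.
Proof.
move=> m3 ok k3.
have [ho _] := us_facts k (ltnW m3); have [_ h2] := ho ok.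
rewrite expnS in h2.
have hq : (m-1)^3 <= (m-1)^k by apply: leq_pexp2l => //; lia.
move: h2 hq; set q := (m-1)^k; set U := uu m k => h2 hq.
have hq3 : (m-1)^3 = (m-1)*(m-1)*(m-1) by rewrite !expnS expn0 muln1 mulnA.
rewrite hq3 in hq.
nia.
Qed.

Lemma not_perm_diff m L L' : good m L -> good m L' -> ~~ perm_eq L L' ->
  exists2 a, a \in L & a \notin L'.
Proof.
move=> /andP[uL /eqP sL] /andP[uL' /eqP sL'] np.
case: (boolP (all (mem L') L)) => [/allP sub|/allPn [z zL zL']]; last by exists z.
have le : size L' <= size L by rewrite sL sL'.
have [_ Heq] := uniq_min_size uL sub le.
by rewrite (uniq_perm uL uL' Heq) in np.
Qed.

Lemma LBodd m k Ls a b : odd k -> size Ls = k -> all (good m) Ls -> uu m k <= Np a Ls b.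
Proof.
move=> ok sLs gLs.
have ek : k = (k./2).*2.+1 by have := odd_double_half k; rewrite ok; lia.
by rewrite ek; apply: LB => //; rewrite -ek.
Qed.

Lemma CY_base m k C0 C1 Ds : 3 <= m -> odd k -> 3 <= k -> size (C1 :: Ds) = k ->
  all (good m) [:: C0, C1 & Ds] -> ~~ perm_eq C0 C1 -> m * (uu m k + 1) <= Cyc [:: C0, C1 & Ds].
Proof.
move=> m3 ok k3 sDs /and3P[gC0 gC1 gDs] np.
have [a0 a0C0 a0C1] := not_perm_diff gC0 gC1 np.
move: (gC0) (gC1) => /andP[uC0 /eqP sC0] /andP[uC1 _].
have gall : all (good m) (C1 :: Ds) by apply/andP.
change (m * (uu m k + 1) <= \sum_(a <- C0) Np a (C1 :: Ds) a).
rewrite (bigD1_nat _ a0C0 uC0).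
have h1 : (m-1)^k <= Np a0 (C1 :: Ds) a0.
  have := Nsplit a0 Ds a0 uC1; rewrite (negbTE a0C1) mul0n addn0 => ->.
  move: sDs => /= <-; exact: pow_bound.
have h2 : (m-1) * uu m k <= \sum_(i <- C0 | i != a0) Np i (C1 :: Ds) i.
  have h2' : \sum_(i <- C0 | i != a0) uu m k <= \sum_(i <- C0 | i != a0) Np i (C1 :: Ds) i.
    by apply: leq_sum => i _; exact: LBodd.
  apply: leq_trans h2'; rewrite sum_const_seq_cond.
  have -> : count (fun i => i != a0) C0 = (size C0).-1 by exact: cnt_neq.
  by rewrite sC0 -subn1 mulnC.
have := E4 m3 ok k3; lia.
Qed.

Lemma CY_ind m k i : forall Cs, 3 <= m -> odd k -> 3 <= k -> size Cs = k.+1 ->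
  all (good m) Cs -> i < k -> ~~ perm_eq (nth [::] Cs i) (nth [::] Cs i.+1) ->
  m * (uu m k + 1) <= Cyc Cs.
Proof.
elim: i => [|i IH] [|C0 [|C1 Ds]] // m3 ok k3 [sDs] gCs ik np; try (simpl in sDs; lia).
- by apply: CY_base => //=; rewrite sDs.
- rewrite Cyc_rot; apply: IH => //.
  + by rewrite /= size_rcons sDs.
  + move: gCs => /and3P[g0 g1 gD]; rewrite /= all_rcons g0 g1 /=; exact: gD.
  + lia.
  + rewrite -rcons_cons !nth_rcons /=.
    have -> : i < (size Ds).+1 by lia.
    have -> : i.+1 < (size Ds).+1 by lia.
    by [].
Qed.

Lemma Np_perm_all C Ds a b : all (fun L => perm_eq L C) Ds -> Np a Ds b = Np a (nseq (size Ds) C) b.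
Proof.
move=> h; apply: Np_perm; elim: Ds h => [|D Ds IH] //= /andP[p1 p2].
by rewrite p1 IH.
Qed.

Lemma CY_all m k Cs : size Cs = k.+1 -> all (good m) Cs ->
  (forall i, i < k -> perm_eq (nth [::] Cs i) (nth [::] Cs i.+1)) ->
  Cyc Cs = m * ss m k.
Proof.
case: Cs => [|C0 Ds] //= [sDs] /andP[gC0 gDs] hp.
have hj : forall j, j <= k -> perm_eq (nth [::] (C0 :: Ds) j) C0.
  elim=> [|j IHj] jk; first exact: perm_refl.
  have h1 := hp j jk; rewrite perm_sym in h1; exact: perm_trans h1 (IHj (ltnW jk)).
have hall : all (fun L => perm_eq L C0) Ds.
  apply/(all_nthP [::]) => j jD; apply: (hj j.+1); rewrite -sDs; exact: jD.
rewrite (eq_bigr (fun a => Np a (nseq k C0) a)); last first.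
  by move=> a _; rewrite (Np_perm_all a a hall) sDs.
exact: (Cyc_unif k gC0).
Qed.

Lemma CY m k Cs : 3 <= m -> odd k -> 3 <= k -> size Cs = k.+1 -> all (good m) Cs ->
  m * (uu m k + 1) <= Cyc Cs.
Proof.
move=> m3 ok k3 sCs gCs.
case: (boolP [forall i : 'I_k, perm_eq (nth [::] Cs i) (nth [::] Cs i.+1)]) => [/forallP h|].
  rewrite (CY_all sCs gCs); last by move=> i ik; exact: (h (Ordinal ik)).
  have [ho _] := us_facts k (ltnW m3); have [-> _] := ho ok; by [].
rewrite negb_forall => /existsP [i np].
exact: (CY_ind (i := i)).
Qed.

Definition Tsum (La Lb : seq nat) LX LY :=
  \sum_(a <- La) \sum_(b <- Lb) (a != b) * (Np a LX b * Np a LY b).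

Lemma main_lb m k1 k2 La Lb LX LY : odd k1 -> odd k2 -> 3 <= k2 ->
  size LX = k1 -> size LY = k2.-1 -> all (good m) [:: La, Lb & LX ++ LY] ->
  m * (m-1) * uu m k1 * uu m k2.-1 <= Tsum La Lb LX LY.
Proof.
move=> ok1 ok2 k23 sX sY.
rewrite /= all_cat => /and4P[gA gB gX gY].
case: (leqP m 2) => [m2|m3].
  by have [h _] := uu_small k1 m2; rewrite h // muln0 mul0n.
set U1 := uu m k1.
have h1 : \sum_(a <- La) \sum_(b <- Lb) (a != b) * (U1 * Np a LY b) <= Tsum La Lb LX LY.
  apply: leq_sum => a _; apply: leq_sum => b _.
  apply: leq_mul => //; apply: leq_mul => //; exact: LBodd.
apply: leq_trans h1.
have e : \sum_(a <- La) \sum_(b <- Lb) (a != b) * (U1 * Np a LY b) = U1 * Cyc (La :: rcons LY Lb).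
  rewrite /= big_distrr /=; apply: eq_bigr => a _.
  rewrite Np_rcons big_distrr /= [RHS]big_mkcond /=; apply: eq_bigr => b _.
  by rewrite eq_sym; case: (b != a); rewrite ?mul1n ?mul0n ?muln0.
rewrite e.
have hc := CY (Cs := La :: rcons LY Lb) m3 ok2 k23.
rewrite /= size_rcons sY all_rcons gA gB gY in hc.
have k2e : k2.-1.+1 = k2 by lia.
rewrite k2e in hc; have {}hc := hc erefl isT.
have es : uu m k2 + 1 = (m-1) * uu m k2.-1.
  have [ho _] := us_facts k2 (ltnW m3); have [<- _] := ho ok2.
  by rewrite -ssS k2e.
rewrite es in hc.
have -> : m * (m - 1) * U1 * uu m k2.-1 = U1 * (m * ((m - 1) * uu m k2.-1)).
  by lia.
by apply: leq_mul.
Qed.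

Lemma main_unif m k1 k2 C : good m C ->
  Tsum C C (nseq k1 C) (nseq k2 C) = m * (m-1) * uu m k1 * uu m k2.
Proof.
move=> gC; move: (gC) => /andP[uC /eqP sC].
rewrite /Tsum (eq_big_seq (fun _ => (m-1) * (uu m k1 * uu m k2))); last first.
  move=> a aC.
  rewrite (eq_big_seq (fun b => (a != b) * (uu m k1 * uu m k2))); last first.
    by move=> b bC; rewrite !(Np_unif _ gC aC bC); case: eqP.
  rewrite -[LHS]big_filter.
  have -> : \sum_(i <- [seq i <- C | predT i]) (a != i) * (uu m k1 * uu m k2) =
            \sum_(i <- C | i != a) (uu m k1 * uu m k2).
    rewrite big_filter [RHS]big_mkcond; apply: eq_bigr => b _.
    by rewrite eq_sym; case: (b != a); rewrite ?mul1n ?mul0n.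
  rewrite sum_const_seq_cond.
  have -> : count (fun i => i != a) C = (size C).-1 by exact: cnt_neq.
  by rewrite sC -subn1.
by rewrite sum_const_seq sC !mulnA.
Qed.

Fixpoint cart (Ls : seq (seq nat)) : seq (seq nat) :=
  if Ls is L :: Ls' then [seq x :: t | x <- L, t <- cart Ls'] else [:: [::]].

Lemma count_allpairs (P : pred (seq nat)) (s : seq nat) (t : seq (seq nat)) :
  count P [seq x :: y | x <- s, y <- t] = \sum_(x <- s) count (fun y => P (x :: y)) t.
Proof.
elim: s => [|x s IH]; first by rewrite big_nil.
by rewrite /= count_cat count_map big_cons IH.
Qed.

Lemma count_cart_cons P L Ls :
  count P (cart (L :: Ls)) = \sum_(x <- L) count (fun y => P (x :: y)) (cart Ls).
Proof. exact: count_allpairs. Qed.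

Lemma Np_count a Ls b :
  count (fun X => path (fun x y => x != y) a (rcons X b)) (cart Ls) = Np a Ls b.
Proof.
elim: Ls a => [|L Ls IH] a /=; first by case: (a != b).
rewrite count_allpairs [RHS]big_mkcond /=; apply: eq_big => // x _.
rewrite -IH.
have -> : count (fun y => path (fun x0 y0 => x0 != y0) a (rcons (x :: y) b)) (cart Ls) =
          (a != x) * count (fun y => path (fun x0 y0 => x0 != y0) x (rcons y b)) (cart Ls).
  rewrite -[LHS]/(count (fun y => (a != x) && path (fun x0 y0 => x0 != y0) x (rcons y b)) (cart Ls)).
  case: (a != x) => /=; first by rewrite mul1n.
  by rewrite mul0n; elim: (cart Ls).
by rewrite eq_sym; case: (x != a); rewrite ?mul1n ?mul0n.
Qed.

Lemma count_cart_cat (P R : pred (seq nat)) LX LY :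
  count (fun t => P (take (size LX) t) && R (drop (size LX) t)) (cart (LX ++ LY)) =
  count P (cart LX) * count R (cart LY).
Proof.
elim: LX P => [|L LX IH] P /=.
  rewrite addn0 (eq_count (a2 := fun t => P [::] && R t)); last by move=> t /=; rewrite take0 drop0.
  case: (P [::]) => /=; first by rewrite mul1n.
  by rewrite mul0n; elim: (cart LY).
rewrite !count_allpairs big_distrl /=; apply: eq_big => // x _.
exact: (IH (fun u => P (x :: u))).
Qed.

Lemma mem_cart s Ls : s \in cart Ls -> size s = size Ls.
Proof.
elim: Ls s => [|L Ls IH] s /=; first by rewrite inE => /eqP ->.
by move=> /allpairsP [[x t] [_ tLs ->]] /=; rewrite (IH _ tLs).
Qed.

Lemma card_count (T : finType) (P : pred T) : #|[set x | P x]| = count P (enum T).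
Proof. rewrite enumT cardE /enum_mem size_filter. apply: eq_count => x. by rewrite !inE. Qed.

Lemma nth_phi N (F : 'I_N -> nat) (i : 'I_N) : nth 0 [seq F j | j <- enum 'I_N] i = F i.
Proof. by rewrite (nth_map i) ?size_enum_ord ?ltn_ord // nth_ord_enum. Qed.

Lemma nth_phiL N (F : 'I_N -> seq nat) (i : 'I_N) : nth [::] [seq F j | j <- enum 'I_N] i = F i.
Proof. by rewrite (nth_map i) ?size_enum_ord ?ltn_ord // nth_ord_enum. Qed.

Lemma cart_uniq Ls : all uniq Ls -> uniq (cart Ls).
Proof.
elim: Ls => [|L Ls IH] //= /andP[uL uLs].
apply: allpairs_uniq => //; first exact: IH.
by move=> [x t] [y u] _ _ /= [-> ->].
Qed.

Lemma mem_cart_nth s Ls : s \in cart Ls ->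
  size s = size Ls /\ forall j, j < size s -> nth 0 s j \in nth [::] Ls j.
Proof.
elim: Ls s => [|L Ls IH] s /=; first by rewrite inE => /eqP ->.
move=> /allpairsP [[x t] [xL tLs ->]] /=.
have [h1 h2] := IH _ tLs; split; first by rewrite h1.
by case=> [|j] //= jt; apply: h2.
Qed.

Lemma map_in_cart N (L : 'I_N -> seq nat) m (f : {ffun 'I_N -> 'I_m}) (r : seq 'I_N) :
  (forall i, size (L i) = m) ->
  [seq nth 0 (L i) (f i) | i <- r] \in cart [seq L i | i <- r].
Proof.
move=> hs; elim: r => [|i r IH] /=; first by rewrite inE.
apply: allpairs_f => //; apply: mem_nth; rewrite hs; exact: ltn_ord.
Qed.

Lemma card_cart N m (L : 'I_N -> seq nat) (Q : pred (seq nat)) :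
  (forall i, uniq (L i) /\ size (L i) = m) ->
  #|[set f : {ffun 'I_N -> 'I_m} | Q [seq nth 0 (L i) (f i) | i <- enum 'I_N]]| =
  count Q (cart [seq L i | i <- enum 'I_N]).
Proof.
move=> hL.
set phi := fun f : {ffun 'I_N -> 'I_m} => [seq nth 0 (L i) (f i) | i <- enum 'I_N].
rewrite (card_count (fun f => Q (phi f))) -(count_map phi Q).
apply/permP; apply: uniq_perm.
- rewrite map_inj_uniq ?enum_uniq // => f g /= eqfg; apply/ffunP => i.
  have := congr1 (nth 0 ^~ i) eqfg.
  rewrite /phi !nth_phi => e.
  apply: val_inj; have [uLi sLi] := hL i.
  by apply/eqP; rewrite -(nth_uniq 0 _ _ uLi) ?sLi ?ltn_ord // e.
- apply: cart_uniq; apply/allP => L' /mapP [i _ ->]; exact: (proj1 (hL i)).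
move=> s; apply/idP/idP.
  by move=> /mapP [f _ ->]; apply: map_in_cart => i; exact: (proj2 (hL i)).
move=> /mem_cart_nth [ss hs]; rewrite size_map size_enum_ord in ss.
have H : forall i : 'I_N, index (nth 0 s i) (L i) < m.
  move=> i; have [_ sLi] := hL i; rewrite -sLi index_mem.
  have := hs i; rewrite ss ltn_ord nth_phiL; by apply.
apply/mapP; exists [ffun i => Ordinal (H i)]; first by rewrite mem_enum.
apply: (@eq_from_nth _ 0); first by rewrite /phi size_map size_enum_ord.
move=> j js; rewrite ss in js.
rewrite /phi (nth_map (Ordinal js)) ?size_enum_ord // ffunE /=.
have -> : nth (Ordinal js) (enum 'I_N) j = Ordinal js.
  by apply: val_inj; rewrite /= nth_enum_ord.
rewrite nth_index //.
have := hs j; rewrite ss js (nth_map (Ordinal js)) ?size_enum_ord //.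
have -> : nth (Ordinal js) (enum 'I_N) j = Ordinal js.
  by apply: val_inj; rewrite /= nth_enum_ord.
by apply.
Qed.

Lemma PA_equiv o l N (c : nat -> nat) : (forall k, k <= l -> theta_pv o l k < N) ->
  [forall x : 'I_N, forall y : 'I_N, path_adj o l x y ==> (c x != c y)] =
  [forall k : 'I_l, c (theta_pv o l k) != c (theta_pv o l k.+1)].
Proof.
move=> hb; apply/forallP/forallP.
  move=> H k.
  have h1 := hb k (ltnW (ltn_ord k)); have h2 := hb k.+1 (ltn_ord k).
  have := forallP (H (Ordinal h1)) (Ordinal h2); move/implyP; apply.
  apply/hasP; exists (nat_of_ord k); first by rewrite mem_iota /= add0n ltn_ord.
  by rewrite /= !eqxx.
move=> H x; apply/forallP => y; apply/implyP => /hasP [k].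
rewrite mem_iota add0n /= => kl /orP [/andP [/eqP ex /eqP ey] | /andP[/eqP ey /eqP ex]].
  by rewrite ex ey; exact: (H (Ordinal kl)).
by rewrite ex ey eq_sym; exact: (H (Ordinal kl)).
Qed.

Lemma forall3 (T : finType) (A B C D : T -> T -> bool) :
  [forall x, forall y, [|| A x y, B x y | C x y] ==> D x y] =
  [&& [forall x, forall y, A x y ==> D x y], [forall x, forall y, B x y ==> D x y] &
      [forall x, forall y, C x y ==> D x y]].
Proof.
apply/idP/idP.
  move=> /forallP H; apply/and3P; split; apply/forallP => x; apply/forallP => y;
  apply/implyP => h; have := forallP (H x) y; rewrite h ?orbT //=; move/implyP; apply.
move=> /and3P [/forallP H1 /forallP H2 /forallP H3]; apply/forallP => x; apply/forallP => y.
apply/implyP => /or3P [h|h|h].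
- by have := forallP (H1 x) y; rewrite h.
- by have := forallP (H2 x) y; rewrite h.
- by have := forallP (H3 x) y; rewrite h.
Qed.

Lemma path_equiv l (F : nat -> nat) a Z b : l = (size Z).+1 ->
  (forall k, k <= l -> F k = nth 0 (a :: rcons Z b) k) ->
  [forall k : 'I_l, F k != F k.+1] = path (fun x y => x != y) a (rcons Z b).
Proof.
move=> el hF; apply/forallP/(pathP 0).
  move=> H i; rewrite size_rcons -el => il.
  have := H (Ordinal il); rewrite /= !hF //; exact: ltnW.
move=> H k; have kl := ltn_ord k.
rewrite !hF //; last exact: ltnW.
apply: H; rewrite size_rcons -el //.
Qed.

Lemma theta_seq l2 l3 a b X Y : 0 < l2 -> 0 < l3 -> size X = l2.-1 -> size Y = l3.-1 ->
  proper_col (theta_graph 1 l2 l3) (fun v => nth 0 (a :: b :: X ++ Y) v) =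
  [&& a != b, path (fun x y => x != y) a (rcons X b) & path (fun x y => x != y) a (rcons Y b)].
Proof.
move=> l2p l3p sX sY.
set s := a :: b :: X ++ Y; set c := fun n => nth 0 s n.
set N := 1 + l2 + l3 - 1.
rewrite /proper_col /theta_graph /theta_adj.
transitivity [&& [forall x : 'I_N, forall y : 'I_N, path_adj 0 1 x y ==> (c x != c y)],
                 [forall x : 'I_N, forall y : 'I_N, path_adj (1.-1) l2 x y ==> (c x != c y)] &
                 [forall x : 'I_N, forall y : 'I_N, path_adj (1.-1 + l2.-1) l3 x y ==> (c x != c y)]].
  exact: (forall3 (fun x y : 'I_N => path_adj 0 1 x y) (fun x y : 'I_N => path_adj (1.-1) l2 x y)
            (fun x y : 'I_N => path_adj (1.-1 + l2.-1) l3 x y) (fun x y : 'I_N => c x != c y)).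
rewrite !PA_equiv; first last.
- move=> k kl; rewrite /theta_pv /N; case: eqP => e1; first by lia.
  case: eqP => e2; lia.
- move=> k kl; rewrite /theta_pv /N; case: eqP => e1; first by lia.
  case: eqP => e2; lia.
- move=> k kl; rewrite /theta_pv /N; case: eqP => e1; first by lia.
  case: eqP => e2; lia.
congr [&& _, _ & _].
- rewrite (@path_equiv 1 (fun k => c (theta_pv 0 1 k)) a [::] b) //=; first by rewrite andbT.
  by move=> k; case: k => [|[|]].
- apply: (@path_equiv l2 (fun k => c (theta_pv (1.-1) l2 k))); first by rewrite sX; lia.
  move=> k kl; rewrite /theta_pv /c /s.
  case: k kl => [|k] kl //=.
  case: eqP => [ek|nk].
    by rewrite /= nth_rcons sX -ek /= ltnn eqxx.
  rewrite addn1 /= nth_cat nth_rcons sX.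
  have -> : k < l2.-1 by lia.
  by [].
- apply: (@path_equiv l3 (fun k => c (theta_pv (1.-1 + l2.-1) l3 k))); first by rewrite sY; lia.
  move=> k kl; rewrite /theta_pv /c /s.
  case: k kl => [|k] kl //=.
  case: eqP => [ek|nk].
    by rewrite /= nth_rcons sY -ek /= ltnn eqxx.
  have -> : 0 + l2.-1 + k.+1 + 1 = (l2.-1 + k).+2 by lia.
  rewrite /= nth_cat nth_rcons sX sY.
  have -> : (l2.-1 + k < l2.-1) = false by lia.
  have -> : k < l3.-1 by lia.
  by rewrite addKn.
Qed.

Lemma proper_col_ext (T : finType) (e : rel T) (c1 c2 : T -> nat) :
  (forall v, c1 v = c2 v) -> proper_col e c1 = proper_col e c2.
Proof.
move=> h; rewrite /proper_col; apply: eq_forallb => x; apply: eq_forallb => y.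
by rewrite !h.
Qed.

Lemma count_andl (c : bool) (P : pred (seq nat)) s : count (fun t => c && P t) s = c * count P s.
Proof. by case: c; rewrite ?mul1n ?mul0n //; elim: s. Qed.

Lemma count_Tsum l2 l3 La Lb LX LY : 0 < l2 -> 0 < l3 -> size LX = l2.-1 -> size LY = l3.-1 ->
  count (fun s => proper_col (theta_graph 1 l2 l3) (fun v => nth 0 s v)) (cart [:: La, Lb & LX ++ LY])
  = Tsum La Lb LX LY.
Proof.
move=> l2p l3p sX sY.
rewrite count_cart_cons /Tsum; apply: eq_big => // a _.
rewrite count_cart_cons; apply: eq_big => // b _.
rewrite (@eq_in_count _ _ (fun t => (a != b) && ((fun X => path (fun x y => x != y) a (rcons X b)) (take (size LX) t)
    && (fun Y => path (fun x y => x != y) a (rcons Y b)) (drop (size LX) t)))).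
  rewrite count_andl.
  have := count_cart_cat (fun X => path (fun x y => x != y) a (rcons X b))
     (fun Y => path (fun x y => x != y) a (rcons Y b)) LX LY.
  by rewrite !Np_count => <-.
move=> t /mem_cart; rewrite size_cat => st.
rewrite -{1}(cat_take_drop (size LX) t) theta_seq //.
  by rewrite size_takel // st leq_addr.
by rewrite size_drop st addKn.
Qed.

Lemma P_list_count l2 l3 m (L : 'I_(1 + l2 + l3 - 1) -> seq nat) :
  (forall v, size (L v) = m /\ uniq (L v)) ->
  P_list (theta_graph 1 l2 l3) m L =
  count (fun s => proper_col (theta_graph 1 l2 l3) (fun v => nth 0 s v))
        (cart [seq L i | i <- enum 'I_(1 + l2 + l3 - 1)]).
Proof.
move=> hL; rewrite -(@card_cart _ m); last by move=> i; have [] := hL i.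
rewrite /P_list; apply: eq_card => f; rewrite !inE; apply: proper_col_ext => v.
by rewrite (nth_phi (fun i => nth 0 (L i) (f i))).
Qed.

Lemma decomp (Ls : seq (seq nat)) l2 l3 : 0 < l2 -> 0 < l3 -> size Ls = 1 + l2 + l3 - 1 ->
  exists La Lb LX LY, Ls = [:: La, Lb & LX ++ LY] /\ size LX = l2.-1 /\ size LY = l3.-1.
Proof.
case: Ls => [|La [|Lb R]] /= l2p l3p sL; try lia.
exists La, Lb, (take l2.-1 R), (drop l2.-1 R).
rewrite cat_take_drop size_takel ?size_drop; first by split => //; split => //; lia.
lia.
Qed.

Theorem lemma2p8 (l2 l3 : nat) :
  0 < l2 -> ~~ odd l2 -> odd l3 -> 1 < l3 ->
  enum_chromatic_choosable (theta_graph 1 l2 l3).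
Proof.
move=> l2p el2 ol3 l3g m.
have l3p : 0 < l3 by lia.
have l33 : 3 <= l3.
  case: l3 ol3 l3g {l3p} => [|[|[|]]] //.
set L0 := fun _ : 'I_(1 + l2 + l3 - 1) => iota 0 m.
have hL0 : m_assignment m L0 by move=> v; rewrite /L0 size_iota iota_uniq.
have chromE : chrom_poly (theta_graph 1 l2 l3) m = P_list (theta_graph 1 l2 l3) m L0.
  rewrite /chrom_poly /P_list; apply: eq_card => f; rewrite !inE.
  by apply: proper_col_ext => v; rewrite /L0 nth_iota.
have gC : good m (iota 0 m) by rewrite /good iota_uniq size_iota eqxx.
have val0 : P_list (theta_graph 1 l2 l3) m L0 = m * (m-1) * uu m l2.-1 * uu m l3.-1.
  rewrite P_list_count; last by move=> v; exact: hL0 v.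
  have -> : [seq L0 i | i <- enum 'I_(1 + l2 + l3 - 1)] = nseq (size (enum 'I_(1 + l2 + l3 - 1))) (iota 0 m).
    by elim: (enum _) => //= x s ->.
  rewrite size_enum_ord.
  have -> : nseq (1 + l2 + l3 - 1) (iota 0 m) =
     [:: iota 0 m, iota 0 m & nseq l2.-1 (iota 0 m) ++ nseq l3.-1 (iota 0 m)].
    by rewrite -nseqD; have -> : 1 + l2 + l3 - 1 = (l2.-1 + l3.-1).+2 by lia.
  rewrite count_Tsum ?size_nseq //; exact: main_unif.
have oddl2 : odd l2.-1 by case: l2 l2p el2 {chromE val0 L0 hL0} => [|l2'] //= _; rewrite negbK.
split.
  by exists L0; split => //; rewrite -chromE.
move=> L hL; rewrite chromE val0 P_list_count; last by move=> v; have [] := hL v.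
have sLs : size [seq L i | i <- enum 'I_(1 + l2 + l3 - 1)] = 1 + l2 + l3 - 1.
  by rewrite size_map size_enum_ord.
have [La [Lb [LX [LY [eLs [sX sY]]]]]] := decomp l2p l3p sLs.
have gall : all (good m) [:: La, Lb & LX ++ LY].
  rewrite -eLs; apply/allP => L' /mapP [i _ ->]; have [h1 h2] := hL i.
  by rewrite /good h2 h1 eqxx.
rewrite eLs count_Tsum //; exact: main_lb.
Qed.
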